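(* Let $\lambda = a + i b$ be a complex eigenvalue (i.e. $b \neq 0$) of $\mathcal{A}\mathcal{P}^{-1}$, with $a$ the real part, $b$ the imaginary part, $i$ the imaginary unit, and $(x; y; z)$ the corresponding eigenvector of the equivalent scaled eigenproblem described in the context. Then, if $0\leq\gamma_{\min}^D<1$, any complex eigenvalue is such that \[ |\lambda-1| \le \sqrt{ 1 - \rho_{\min}}, \qquad \text{where} \quad \rho_{\min} = \frac{\gamma^A_{\min}\|x\|^2 + \gamma_{\min}^D \|y\|^2 + \gamma_{\min}^E \|z\|^2} {\|y\|^2 +\gamma^E_{\min}\|z\|^2}, \] otherwise (if $\gamma_{\min}^D \ge 1$), all eigenvalues are real.
   Context: Consider the double saddle-point matrix $\mathcal{A}=\begin{bmatrix} A & B^{T} & 0\\ B & -D & C^{T}\\ 0 & C & E\end{bmatrix}$ of size $n+m+p$, $n\ge\max\{m,p\}$, where $A\in\mathbb{R}^{n\times n}$ and $E\in\mathbb{R}^{p\times p}$ are symmetric positive definite (SPD), $B\in\mathbb{R}^{m\times n}$ has full row rank, $C\in\mathbb{R}^{p\times m}$ has full rank, and $D\in\mathbb{R}^{m\times m}$ is symmetric positive semidefinite. Let $S=D+BA^{-1}B^T$, $X=E+CS^{-1}C^T$, and let $\widehat A,\widehat S,\widehat X$ be SPD approximations of $A,S,X$. The block triangular preconditioner is $\mathcal{P}=\begin{bmatrix} \widehat A & B^{T} & 0\\ 0 & -\widehat S & C^{T}\\ 0 & 0 & \widehat X\end{bmatrix}$, and $\mathcal{P}_D=\mathrm{blkdiag}(\widehat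 A,\widehat S,\widehat X)$. Set $\widetilde S = D + B\widehat A^{-1}B^T$, $\widetilde X = E + C\widehat S^{-1}C^T$, $\overline A=\widehat A^{-1/2}A\widehat A^{-1/2}$, $\overline D=\widehat S^{-1/2}D\widehat S^{-1/2}$, $\overline E=\widehat X^{-1/2}E\widehat X^{-1/2}$, $R=\widehat S^{-1/2}B\widehat A^{-1/2}$, $K=\widehat X^{-1/2}C\widehat S^{-1/2}$. The eigenvalues of $\mathcal{A}\mathcal{P}^{-1}$ are those of the generalized problem $\mathcal{P}_D^{-1/2}\mathcal{A}\mathcal{P}_D^{-1/2}w=\lambda\mathcal{P}_D^{-1/2}\mathcal{P}\mathcal{P}_D^{-1/2}w$, i.e. $\overline A x - \lambda x = (\lambda-1)R^T y$, $Rx - \overline D y - (\lambda-1)K^T z = -\lambda y$, $Ky + \overline E z = \lambda z$, with $w=(x;y;z)$. Define $\gamma^A_{\min}=\lambda_{\min}(\widehat A^{-1}A)$ (with $\gamma_{\max}^A$ analogous), $\gamma^D_{\min}=\lambda_{\min}(\widehat S^{-1}D)\ge 0$, $\gamma^E_{\min}=\lambda_{\min}(\widehat X^{-1}E)>0$. It is assumed that $1\in[\gamma^A_{\min},\gamma^A_{\max}]$. *)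

(* Defs.v *)
From HB Require Import structures.
From mathcomp Require Import all_boot all_order all_algebra.
From mathcomp Require Import complex.
Set Implicit Arguments. Unset Strict Implicit. Unset Printing Implicit Defensive.
Import Order.TTheory GRing.Theory Num.Theory.
Local Open Scope ring_scope.

Section Defs.
Variable R : rcfType.

Definition spd n (M : 'M[R]_n) : Prop :=
  M^T = M /\ forall v : 'cV[R]_n, v != 0 -> 0 < (v^T *m M *m v) 0 0.
Definition spsd n (M : 'M[R]_n) : Prop :=
  M^T = M /\ forall v : 'cV[R]_n, 0 <= (v^T *m M *m v) 0 0.

Definition is_inv_sqrt n (M H : 'M[R]_n) : Prop :=
  spd H /\ H *m H = invmx M.

Definition is_min_eig n (M : 'M[R]_n) (c : R) : Prop :=
  eigenvalue M c /\ forall d, eigenvalue M d -> c <= d.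
Definition is_max_eig n (M : 'M[R]_n) (c : R) : Prop :=
  eigenvalue M c /\ forall d, eigenvalue M d -> d <= c.

Definition toCmx m n (M : 'M[R]_(m, n)) : 'M[R[i]]_(m, n) :=
  map_mx (fun r => r%:C%C) M.

Definition cabs (z : R[i]) : R := ComplexField.Normc.normc z.

Definition cnorm2 n (v : 'cV[R[i]]_n) : R :=
  \sum_(k < n) cabs (v k 0) ^+ 2.
End Defs.

(* Main.v *)
Require Import Defs.
From HB Require Import structures.
From mathcomp Require Import all_boot all_order all_algebra.
From mathcomp Require Import complex spectral sesquilinear.
From mathcomp Require Import ring lra.
Import Order.TTheory GRing.Theory Num.Theory.
Local Open Scope ring_scope.
Set Implicit Arguments. Unset Strict Implicit. Unset Printing Implicit Defensive.

Local Open Scope sesquilinear_scope.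
Section Helpers.
Variable R : rcfType.
Local Notation C := (R[i]).

Lemma conjR (r : R) : (r%:C)%C^* = (r%:C)%C :> C.
Proof. exact: conjc_real. Qed.

Definition cdot n (u w : 'cV[C]_n) : C := \sum_k (u k 0)^* * w k 0.

Lemma cdotD n (u w1 w2 : 'cV[C]_n) : cdot u (w1 + w2) = cdot u w1 + cdot u w2.
Proof. by rewrite /cdot -big_split; apply: eq_bigr => k _; rewrite mxE mulrDr. Qed.

Lemma cdotN n (u w : 'cV[C]_n) : cdot u (- w) = - cdot u w.
Proof. by rewrite /cdot -sumrN; apply: eq_bigr => k _; rewrite mxE mulrN. Qed.

Lemma cdotB n (u w1 w2 : 'cV[C]_n) : cdot u (w1 - w2) = cdot u w1 - cdot u w2.
Proof. by rewrite cdotD cdotN. Qed.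

Lemma cdotZ n (u w : 'cV[C]_n) a : cdot u (a *: w) = a * cdot u w.
Proof. by rewrite /cdot mulr_sumr; apply: eq_bigr => k _; rewrite mxE mulrCA. Qed.

Lemma cdot_conj m n (N : 'M[R]_(m, n)) (y : 'cV[C]_m) (x : 'cV[C]_n) :
  (cdot y (toCmx N *m x))^* = cdot x (toCmx N^T *m y).
Proof.
rewrite /cdot rmorph_sum /=.
under eq_bigr => i _ do rewrite mxE rmorphM /= conjCK rmorph_sum mulr_sumr.
rewrite exchange_big /=; apply: eq_bigr => j _.
rewrite mxE mulr_sumr; apply: eq_bigr => i _.
by rewrite !mxE rmorphM /= conjR; ring.
Qed.


Lemma cdotE n (u w : 'cV[C]_n) : cdot u w = ((map_mx Num.conj u)^T *m w) 0 0.
Proof. by rewrite mxE; apply: eq_bigr => k _; rewrite !mxE. Qed.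

Lemma cabs2 (z : C) : ((cabs z ^+ 2)%:C)%C = z^* * z.
Proof.
case: z => a b; rewrite /cabs /= sqr_sqrtr ?addr_ge0 ?sqr_ge0 //.
by apply/eqP; rewrite eq_complex /=; apply/andP; split; apply/eqP; ring.
Qed.

Lemma cdot_self n (x : 'cV[C]_n) : cdot x x = ((cnorm2 x)%:C)%C.
Proof.
rewrite /cnorm2 rmorph_sum /cdot; apply: eq_bigr => k _.
by rewrite -cabs2.
Qed.

Lemma cnorm2_ge0 n (x : 'cV[C]_n) : 0 <= cnorm2 x.
Proof. by apply: sumr_ge0 => k _; rewrite sqr_ge0. Qed.

Lemma cnorm2_eq0 n (x : 'cV[C]_n) : cnorm2 x = 0 -> x = 0.
Proof.
move=> h; apply/matrixP => i j; rewrite ord1 mxE.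
have := psumr_eq0P (fun k _ => sqr_ge0 (cabs (x k 0))) h => /(_ i isT).
by move/eqP; rewrite sqrf_eq0 => /eqP /ComplexField.Normc.eq0_normc.
Qed.

Lemma eig_toC n (M : 'M[R]_n) (r : R) :
  eigenvalue (toCmx M) ((r%:C)%C) -> eigenvalue M r.
Proof. by rewrite /toCmx (eigenvalue_map (real_complex R)). Qed.

Lemma rayleigh n (M : 'M[R]_n) (c : R) : M^T = M ->
  (forall d, eigenvalue M d -> c <= d) ->
  forall v : 'cV[C]_n, (c%:C)%C * cdot v v <= cdot v (toCmx M *m v).
Proof.
move=> HM Hc v.
set A := toCmx M.
have herm : A \is hermsymmx.
  apply/is_hermitianmxP; rewrite expr0 scale1r; apply/matrixP => i j.
  rewrite !mxE conjR; have := congr1 (fun X : 'M[R]_n => X j i) HM; rewrite mxE => ->.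
  done.
have /orthomx_spectralP eA := hermitian_normalmx herm.
have Pu := spectral_unitarymx A.
have Pun := spectral_unit A.
have real_sp := hermitian_spectral_diag_real herm.
move: eA; set P := spectralmx A; set sp := spectral_diag A => eA.
set w := P *m v.
have c1 : cdot v (A *m v) = \sum_k sp 0 k * ((w k 0)^* * w k 0).
  rewrite cdotE eA invmx_unitary // !mulmxA.
  have -> : (map_mx Num.conj v)^T *m P^t* = (map_mx Num.conj w)^T.
    rewrite /w map_mxM trmx_mul map_trmx; congr (_ *m _); by apply/matrixP => i j; rewrite !mxE.
  rewrite -[_ *m P *m v]mulmxA -/w -mulmxA mxE; apply: eq_bigr => k _.
  by rewrite mul_diag_mx !mxE; ring.
have c2 : cdot v v = \sum_k ((w k 0)^* * w k 0).
  have -> : \sum_k ((w k 0)^* * w k 0) = cdot w w by [].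
  rewrite !cdotE.
  have -> : (map_mx Num.conj w)^T *m w = (map_mx Num.conj v)^T *m (P^t* *m P) *m v.
    rewrite /w map_mxM trmx_mul !mulmxA; congr (_ *m _ *m _).
    congr (_ *m _); by apply/matrixP => i j; rewrite !mxE.
  by rewrite -invmx_unitary // mulVmx // mulmx1.
have c3 : forall k, (c%:C)%C <= sp 0 k.
  move=> k.
  have rk : sp 0 k \is Num.real by apply: (mxOverP real_sp).
  rewrite -(RRe_real rk) lecR; apply: Hc; apply: eig_toC.
  rewrite (RRe_real rk); apply/eigenvalueP.
  exists (delta_mx 0 k *m P).
    rewrite -/A eA !mulmxA mulmxK //.
    rewrite scalemxAl; congr (_ *m _); apply/matrixP => i j.
    rewrite mul_mx_diag !mxE; case: (j =P k) => [->|]; rewrite ?andbF ?andbT ?mul0r ?mulr0 //.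
    by rewrite mulrC.
  apply/eqP => /(congr1 (mulmx^~ (invmx P))); rewrite mulmxK // mul0mx.
  move/matrixP/(_ 0 k); rewrite !mxE !eqxx /= => /eqP.
  by rewrite oner_eq0.
rewrite c1 c2 mulr_sumr; apply: ler_sum => k _.
by apply: ler_wpM2r => //; rewrite mulrC mul_conjC_ge0.
Qed.

Lemma keyeq (a b al X de Y ep Z : R) : b != 0 ->
  let lam : C := (a +i* b)%C in
  let mu := lam - 1 in
  (al%:C)%C - lam^* * (X%:C)%C - mu^* * (de%:C)%C - mu^* * mu * (lam^* * (Z%:C)%C - (ep%:C)%C)
   + lam * mu^* * (Y%:C)%C = 0 ->
  ((a - 1)^+2 + b^+2) * (Y + ep) = Y - al - de.
Proof.
move=> hb lam mu /eqP; rewrite eq_complex /= => /andP[/eqP hre /eqP him].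
have K : X + de + ((a - 1)^+2 + b^+2) * Z - Y = 0.
  have : b * (X + de + ((a - 1)^+2 + b^+2) * Z - Y) = 0 by rewrite -him; ring.
  by move/eqP; rewrite mulf_eq0 (negbTE hb) /= => /eqP.
have E : ((a - 1)^+2 + b^+2) * (Y + ep) - (Y - al - de) = (al - (a * X - - b * 0) - ((a - 1) * de - - (b - 0) * 0) -
  (((a - 1) * (a - 1) - - (b - 0) * (b - 0)) * (a * Z - - b * 0 - ep) -
   ((a - 1) * (b - 0) + - (b - 0) * (a - 1)) * (a * 0 + - b * Z - 0)) +
  ((a * (a - 1) - b * - (b - 0)) * Y - (a * - (b - 0) + b * (a - 1)) * 0)) + a * (X + de + ((a - 1)^+2 + b^+2) * Z - Y) by ring.
by apply/eqP; rewrite -subr_eq0 E hre K mulr0 addr0.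
Qed.

Lemma cdot_conjT m n (N : 'M[R]_(m, n)) (y : 'cV[C]_m) (x : 'cV[C]_n) :
  (cdot y (toCmx N *m x))^* = cdot x ((toCmx N)^T *m y).
Proof. by rewrite cdot_conj /toCmx map_trmx. Qed.

Lemma spd_unit n (M : 'M[R]_n) : spd M -> M \in unitmx.
Proof.
case=> _ HM; rewrite -row_free_unit -kermx_eq0; apply/negPn/negP.
move=> /rowV0Pn [v /sub_kermxP vM v0].
have := HM v^T; rewrite trmx_eq0 => /(_ v0).
by rewrite trmxK vM mul0mx mxE ltxx.
Qed.

Lemma eig_swap n (P M : 'M[R]_n) d : P \in unitmx ->
  eigenvalue (P *m M) d = eigenvalue (M *m P) d.
Proof.
move=> Pu; apply/eigenvalueP/eigenvalueP => [[v hv v0]|[v hv v0]].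
  exists (v *m P).
    by rewrite !mulmxA -(mulmxA v P M) hv -scalemxAl.
  apply: contra v0 => /eqP h; by rewrite -(mulmxK Pu v) h mul0mx.
exists (v *m invmx P).
  rewrite mulmxA mulmxKV //.
  have -> : v *m M = (v *m (M *m P)) *m invmx P by rewrite mulmxA mulmxK.
  by rewrite hv scalemxAl.
apply: contra v0 => /eqP h; by rewrite -(mulmxKV Pu v) h mul0mx.
Qed.

Lemma rnorm_gt0 n (v : 'rV[R]_n) : v != 0 -> 0 < (v *m v^T) 0 0.
Proof.
move=> v0; rewrite mxE lt_def; apply/andP; split; last first.
  by apply: sumr_ge0 => k _; rewrite mxE -expr2 sqr_ge0.
have hk : forall k, 0 <= v 0 k * v^T k 0 by move=> k; rewrite mxE -expr2 sqr_ge0.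
apply: contra v0 => /eqP h; apply/eqP/matrixP => i j; rewrite ord1 [RHS]mxE.
have := psumr_eq0P (fun k _ => hk k) h (i := j) isT.
by rewrite mxE -expr2 => /eqP; rewrite sqrf_eq0 => /eqP.
Qed.

Lemma eig_pos n (A H : 'M[R]_n) d : spd A -> spd H ->
  eigenvalue (H *m A *m H) d -> 0 < d.
Proof.
move=> [_ hA] hH /eigenvalueP [v hv v0].
have Hu := spd_unit hH.
have vH0 : (v *m H) != 0.
  apply: contra v0 => /eqP h; by rewrite -(mulmxK Hu v) h mul0mx.
have := hA ((v *m H)^T); rewrite trmx_eq0 => /(_ vH0).
have -> : (v *m H)^T^T *m A *m (v *m H)^T = (v *m (H *m A *m H)) *m v^T.
  by rewrite trmxK trmx_mul hH.1 !mulmxA.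
rewrite hv -scalemxAl mxE.
by rewrite pmulr_lgt0 // rnorm_gt0.
Qed.



Lemma keyeq' (lam : C) (al X de Y ep Z : R) : complex.Im lam != 0 ->
  let mu := lam - 1 in
  (al%:C)%C - lam^* * (X%:C)%C - mu^* * (de%:C)%C - mu^* * mu * (lam^* * (Z%:C)%C - (ep%:C)%C)
   + lam * mu^* * (Y%:C)%C = 0 ->
  ((complex.Re lam - 1)^+2 + (complex.Im lam)^+2) * (Y + ep) = Y - al - de.
Proof. by case: lam => a b /= hb; apply: keyeq. Qed.

Lemma cabs_sub1 (lam : C) : cabs (lam - 1) = Num.sqrt ((complex.Re lam - 1)^+2 + (complex.Im lam)^+2).
Proof. by case: lam => a b; rewrite /cabs /= subr0. Qed.

Lemma realq k (M : 'M[R]_k) (v : 'cV[C]_k) : M^T = M ->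
  cdot v (toCmx M *m v) = ((complex.Re (cdot v (toCmx M *m v)))%:C)%C.
Proof. by move=> hM; rewrite RRe_real //; apply/CrealP; rewrite cdot_conj hM. Qed.

Lemma symm3 k (H M : 'M[R]_k) : H^T = H -> M^T = M -> (H *m M *m H)^T = H *m M *m H.
Proof. by move=> h1 h2; rewrite !trmx_mul h1 h2 mulmxA. Qed.

Lemma eigT k (H M Mh : 'M[R]_k) d : H \in unitmx -> H *m H = invmx Mh ->
  eigenvalue (H *m M *m H) d = eigenvalue (invmx Mh *m M) d.
Proof. by move=> hu h2; rewrite -eig_swap // mulmxA h2. Qed.

End Helpers.

Unset Implicit Arguments. Set Strict Implicit.
Local Close Scope sesquilinear_scope.

Theorem theorem1 (R : rcfType) (n m p : nat)
  (A : 'M[R]_n) (B : 'M[R]_(m, n)) (C : 'M[R]_(p, m))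
  (D : 'M[R]_m) (E : 'M[R]_p)
  (Ahat : 'M[R]_n) (Shat : 'M[R]_m) (Xhat : 'M[R]_p)
  (Ah Sh Xh : 'M[R]_(_))
  (gAmin gAmax gDmin gEmin : R)
  (lam : R[i]) (x : 'cV[R[i]]_n) (y : 'cV[R[i]]_m) (z : 'cV[R[i]]_p) :
  (maxn m p <= n)%N ->
  spd A -> spd E -> \rank B = m -> \rank C = minn p m -> spsd D ->
  spd Ahat -> spd Shat -> spd Xhat ->
  is_inv_sqrt Ahat Ah -> is_inv_sqrt Shat Sh -> is_inv_sqrt Xhat Xh ->
  is_min_eig (invmx Ahat *m A) gAmin -> is_max_eig (invmx Ahat *m A) gAmax ->
  is_min_eig (invmx Shat *m D) gDmin -> is_min_eig (invmx Xhat *m E) gEmin ->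
  gAmin <= 1 <= gAmax ->
  let Abar := toCmx (Ah *m A *m Ah) in
  let Dbar := toCmx (Sh *m D *m Sh) in
  let Ebar := toCmx (Xh *m E *m Xh) in
  let Rm := toCmx (Sh *m B *m Ah) in
  let Km := toCmx (Xh *m C *m Sh) in
  [|| x != 0, y != 0 | z != 0] ->
  Abar *m x - lam *: x = (lam - 1) *: (Rm^T *m y) ->
  Rm *m x - Dbar *m y - (lam - 1) *: (Km^T *m z) = - (lam *: y) ->
  Km *m y + Ebar *m z = lam *: z ->
  Im lam != 0 ->
  let rho_min := (gAmin * cnorm2 x + gDmin * cnorm2 y + gEmin * cnorm2 z)
                 / (cnorm2 y + gEmin * cnorm2 z) in
  (0 <= gDmin < 1 -> cabs (lam - 1) <= Num.sqrt (1 - rho_min)) /\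
  (1 <= gDmin -> False).
Proof.
move=> _ hA hE _ _ hD _ _ _ [hAh hAh2] [hSh hSh2] [hXh hXh2]
  [eA hAmin] _ [eD hDmin] [eE hEmin] _ Abar Dbar Ebar Rm Km hnz e1 e2 e3 hIm rho.
have rhoE : rho = (gAmin * cnorm2 x + gDmin * cnorm2 y + gEmin * cnorm2 z)
  / (cnorm2 y + gEmin * cnorm2 z) by [].
move: e1 e2 e3; rewrite /Abar /Dbar /Ebar /Rm /Km => e1 e2 e3.
have AhU := spd_unit hAh; have ShU := spd_unit hSh; have XhU := spd_unit hXh.
have sA := symm3 hAh.1 hA.1; have sD := symm3 hSh.1 hD.1; have sE := symm3 hXh.1 hE.1.
have rA := rayleigh sA (fun d hd => hAmin d ltac:(by rewrite -(eigT _ _ AhU hAh2))) x.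
have rD := rayleigh sD (fun d hd => hDmin d ltac:(by rewrite -(eigT _ _ ShU hSh2))) y.
have rE := rayleigh sE (fun d hd => hEmin d ltac:(by rewrite -(eigT _ _ XhU hXh2))) z.
have gA0 : 0 < gAmin by apply: (eig_pos hA hAh); rewrite (eigT _ _ AhU hAh2).
have gE0 : 0 < gEmin by apply: (eig_pos hE hXh); rewrite (eigT _ _ XhU hXh2).
have hal := realq x sA; have hde := realq y sD; have hep := realq z sE.
move: hal hde hep rA rD rE.
set al := complex.Re _; set de := complex.Re _; set ep := complex.Re _.
move=> hal hde hep rA rD rE.
have hX := cdot_self x; have hY := cdot_self y; have hZ := cdot_self z.
move: hX hY hZ rhoE; set X := cnorm2 x; set Y := cnorm2 y; set Z := cnorm2 z.
move=> hX hY hZ rhoE.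
rewrite hX hal -rmorphM lecR in rA.
rewrite hY hde -rmorphM lecR in rD.
rewrite hZ hep -rmorphM lecR in rE.
have X0 : 0 <= X := cnorm2_ge0 x.
have Y0 : 0 <= Y := cnorm2_ge0 y.
have Z0 : 0 <= Z := cnorm2_ge0 z.
have E1 := congr1 (cdot x) e1; rewrite cdotB !cdotZ hal hX in E1.
have E2 := congr1 (cdot y) e2; rewrite !cdotB cdotN !cdotZ hde hY in E2.
have E3 := congr1 (cdot z) e3; rewrite cdotD !cdotZ hep hZ in E3.
have ht := cdot_conjT (Sh *m B *m Ah) y x.
have hw := cdot_conjT (Xh *m C *m Sh) z y.
move: ht hw E1 E2 E3.
set t := cdot y _; set w := cdot z _ => ht hw E1 E2 E3.
rewrite -ht in E1; rewrite -hw in E2.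
have H3 : w^* = lam^* * (Z%:C)%C - (ep%:C)%C.
  have -> : w = lam * (Z%:C)%C - (ep%:C)%C by rewrite -E3 addrK.
  by rewrite rmorphB rmorphM /= !conjR.
rewrite H3 in E2.
have H1 : (lam - 1)^* * t = (al%:C)%C - lam^* * (X%:C)%C.
  have := congr1 Num.conj E1; rewrite rmorphB !rmorphM /= !conjR conjCK.
  by move=> ->.
have F : (al%:C)%C - lam^* * (X%:C)%C - (lam - 1)^* * (de%:C)%C
   - (lam - 1)^* * (lam - 1) * (lam^* * (Z%:C)%C - (ep%:C)%C)
   + lam * (lam - 1)^* * (Y%:C)%C = 0.
  rewrite -H1.
  have -> : (lam - 1)^* * t - (lam - 1)^* * (de%:C)%C
   - (lam - 1)^* * (lam - 1) * (lam^* * (Z%:C)%C - (ep%:C)%C)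
   + lam * (lam - 1)^* * (Y%:C)%C =
   (lam - 1)^* * ((t - (de%:C)%C - (lam - 1) * (lam^* * (Z%:C)%C - (ep%:C)%C))
       - - (lam * (Y%:C)%C)) by ring.
  by rewrite E2 subrr mulr0.
have hIm' : complex.Im lam != 0.
  by move: hIm; rewrite -complexIm; apply: contra => /eqP ->.
have key := keyeq' hIm' F.
move: key; set s2 := (_ + _) => key.
have s2pos : 0 < s2.
  rewrite /s2 ltr_pwDr ?sqr_ge0 // lt_def sqrf_eq0 hIm' sqr_ge0 //.
have Ypos : 0 < Y + ep.
  rewrite lt_def; apply/andP; split; last by nra.
  apply/negP => /eqP hYe.
  have Yz : Y = 0 by nra.
  have epz : ep = 0 by nra.
  have Zz : Z = 0 by nra.
  have Xz : X = 0.
    have : gDmin * Y = 0 by rewrite Yz mulr0.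
    move=> hgd.
    have : al + de = 0 by move: key; rewrite hYe mulr0 Yz; lra.
    nra.
  move: hnz; rewrite (cnorm2_eq0 Xz) (cnorm2_eq0 Yz) (cnorm2_eq0 Zz) !eqxx.
  done.
have P2 : 0 < s2 * (Y + ep) by rewrite mulr_gt0.
have gAX : 0 <= gAmin * X by rewrite mulr_ge0 // ltW.
split.
  case/andP => gD0 gD1.
  have gDY : 0 <= gDmin * Y by rewrite mulr_ge0.
  have Ypos' : 0 < Y by lra.
  have den : 0 < Y + gEmin * Z by rewrite ltr_pwDl // mulr_ge0 // ltW.
  have h1r : 1 - rho = (Y - gAmin * X - gDmin * Y) / (Y + gEmin * Z).
    by rewrite rhoE; field; rewrite gt_eqF.
  have hs : s2 * (Y + gEmin * Z) <= s2 * (Y + ep).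
    by apply: ler_wpM2l; [exact: ltW | rewrite lerD2l].
  have hle : s2 <= 1 - rho by rewrite h1r ler_pdivlMr //; lra.
  rewrite cabs_sub1 -/s2 ler_sqrt //; apply: le_trans hle; exact: ltW.
move=> gD1.
have : Y <= gDmin * Y by rewrite ler_peMl.
lra.
Qed.
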